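(* Assume the setting in the context (in particular Assumption (A)). Let $\rho>0$, $z_0\in V_f(\rho)$ and $\epsilon>0$, and run Algorithm $\mathcal{A}_*$ from $z_0$ with accuracy $\epsilon$, producing $z_j$, $s_j$, $n_j$, $m_j$ and $j_{out}$. Then: (i) for every $j\in\{0,\dots,j_{out}\}$ we have $z_j\in V_f(\rho)$, and the conclusions of the guarantee for $\mathcal{A}_d$ hold with $r=z_j$, $n=n_j$, $z=z_{j+1}$, $m=m_{j+1}$; namely $f(z_{j+1})\leq f(z_j)-\frac{1}{2L_f}\|g(z_j)\|_*^2$, $f(z_{j+1})-f^*\leq\left(\frac{\bar n_\rho}{m_{j+1}+1}\right)^2(f(z_j)-f^* )$, and $n_j\in(0,\lceil4\bar n_\rho\rceil]\Rightarrow m_{j+1}\in[n_j,\lceil4\bar n_\rho\rceil]$; (ii) the sequence $\{m_j\}$ is non-decreasing; in particular $m_j\leq n_j\leq m_{j+1}$ for all $j\in\{0,\dots,j_{out}\}$; (iii) $s_j\in(0,1]$ for all $j\in\{2,\dots,j_{out}\}$.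
   Context: Let $f:\mathbb{R}^n\to(-\infty,\infty]$ be a proper closed convex function such that the problem $f^*=\min_{x\in\mathbb{R}^n}f(x)$ is solvable. Let $\Omega_f=\{x: f(x)=f^*\}$, fix a norm $\|\cdot\|$ on $\mathbb{R}^n$ with dual norm $\|y\|_*=\sup\{y^Tz:\|z\|\leq 1\}$, and for $x\in\mathbb{R}^n$ let $\bar x=\arg\min_{z\in\Omega_f}\|x-z\|$. For $\rho\geq0$ let $V_f(\rho)=\{x: f(x)-f^*\leq\rho\}$. Let $\mathcal{A}$ be an iterative algorithm: for $x_0\in\mathrm{dom} f$ and integer $k\geq1$, $\mathcal{A}(x_0,k)$ denotes its $k$-th iterate started from $x_0$ (and $\mathcal{A}(x_0,0)=x_0$). Assumption (A): (i) for every $\rho>0$ there is $\mu_\rho>0$ with $f(x_0)-f^*\geq\frac{\mu_\rho}{2}\|x_0-\bar x_0\|^2$ for all $x_0\in V_f(\rho)$; (ii) there exist $a_f>0$, $L_f>0$ and $g:\mathbb{R}^n\to\mathbb{R}^n$ with $g(x)=0\iff x\in\Omega_f$ such that for every $x_0\in\mathrm{dom} f$: $f(\mathcal{A}(x_0,1))\leq f(x_0)-\frac{1}{2L_f}\|g(x_0)\|_*^2$ and $f(\mathcal{A}(x_0,k))-f^*\leq\frac{a_f}{(k+1)^2}\|x_0-\bar x_0\|^2$ for all $k\geq1$; (iii) $\bar n_\rho:=\max\{\frac12,\sqrt{2a_f/\mu_\rho}\}$. Procedure $\mathcal{A}_d(r,n)$ (input $r\in\mathrm{dom} f$, $n\in\mathbb{R}$):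 set $x_0=r$, $k=0$. Repeat: $k\gets k+1$; set $x_k=\mathcal{A}(x_0,k)$ if $f(\mathcal{A}(x_0,k))\leq f(x_{k-1})$, and $x_k=x_{k-1}$ otherwise; $\ell=\lfloor k/2\rfloor$; until $k\geq n$ and $f(x_\ell)-f(x_k)\leq\frac13(f(x_0)-f(x_\ell))$. Output $z=x_k$, $m=k$. Algorithm $\mathcal{A}_*(z_0)$ (input $z_0\in\mathrm{dom} f$, $\epsilon>0$): set $m_0=1$, $m_{-1}=1$, $j=-1$. Repeat: $j\gets j+1$; $s_j=\sqrt{\frac{f(z_{j-1})-f(z_j)}{f(z_{j-2})-f(z_j)}}$ if $j\geq2$ and $s_j=0$ otherwise; $n_j=\max\{m_j,4s_jm_{j-1}\}$; $[z_{j+1},m_{j+1}]=\mathcal{A}_d(z_j,n_j)$; until $f(z_j)-f(z_{j+1})\leq\epsilon$. Output $z_{out}=z_{j+1}$, $j_{out}=j$. *)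

(* Defs.v *)
From HB Require Import structures.
From mathcomp Require Import all_boot all_order all_algebra.
From mathcomp Require Import all_classical all_reals all_analysis.
Set Implicit Arguments. Unset Strict Implicit. Unset Printing Implicit Defensive.
Import Order.TTheory GRing.Theory Num.Theory.
Import numFieldNormedType.Exports.
Local Open Scope classical_set_scope.
Local Open Scope ring_scope.

Section Defs.
Variables (R : realType) (n : nat).
Local Notation vec := 'rV[R]_n.

Definition dotp (y z : vec) : R := \sum_(i < n) y 0 i * z 0 i.

Definition is_norm (N : vec -> R) : Prop :=
  [/\ forall x, 0 <= N x,
      forall x, N x = 0 -> x = 0,
      forall (a : R) x, N (a *: x) = `|a| * N x &
      forall x y, N (x + y) <= N x + N y].

Definition dualnorm (N : vec -> R) (y : vec) : R :=
  sup [set r | exists z, N z <= 1 /\ r = dotp y z].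

Definition proper_fun (f : vec -> \bar R) : Prop :=
  (forall x, f x != -oo%E) /\ (exists x, (f x < +oo)%E).

Definition closed_fun (f : vec -> \bar R) : Prop :=
  forall a : R, closed [set x | (f x <= a%:E)%E].

Definition convex_fun (f : vec -> \bar R) : Prop :=
  forall (x y : vec) (t : R), 0 < t < 1 ->
    (f (t *: x + (1 - t) *: y)%R <= t%:E * f x + (1 - t)%:E * f y)%E.

(* real value of f (used only at points of dom f) *)
Definition fr (f : vec -> \bar R) (x : vec) : R := fine (f x).

Fixpoint Ad_x (f : vec -> \bar R) (A : vec -> nat -> vec) (r : vec) (k : nat)
  : vec :=
  match k with
  | 0 => r
  | k'.+1 => let xprev := Ad_x f A r k' in
             if (f (A r k'.+1) <= f xprev)%E then A r k'.+1 else xprev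
  end.

Definition Ad_stop (f : vec -> \bar R) (A : vec -> nat -> vec) (r : vec)
  (nn : R) (k : nat) : Prop :=
  let x := Ad_x f A r in
  nn <= k%:R /\
  fr f (x k./2) - fr f (x k) <= 3^-1 * (fr f (x 0) - fr f (x k./2)).

Definition Ad_out (f : vec -> \bar R) (A : vec -> nat -> vec) (r : vec)
  (nn : R) (z : vec) (m : nat) : Prop :=
  (1 <= m)%N /\ Ad_stop f A r nn m /\
  (forall k, (1 <= k < m)%N -> ~ Ad_stop f A r nn k) /\
  z = Ad_x f A r m.

(* ---- Algorithm A_*(z0) with accuracy eps ----
   A terminating run: sequences z, m (indices 0..jout+1), s, nn (indices
   0..jout) and the output index jout.  m_{-1} = 1 = m_0, so m_{j-1} is
   written m j.-1. *)
Definition Astar_run (f : vec -> \bar R) (A : vec -> nat -> vec) (z0 : vec)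
  (eps : R) (z : nat -> vec) (m : nat -> nat) (s nn : nat -> R) (jout : nat)
  : Prop :=
  [/\ z 0%N = z0, m 0%N = 1%N,
      forall j, (j <= jout)%N ->
        s j = (if (2 <= j)%N then
                 Num.sqrt ((fr f (z j.-1) - fr f (z j)) /
                           (fr f (z j.-2) - fr f (z j)))
               else 0)
        /\ nn j = Num.max (m j)%:R (4 * s j * (m j.-1)%:R)
        /\ Ad_out f A (z j) (nn j) (z j.+1) (m j.+1),
      forall j, (j < jout)%N -> eps < fr f (z j) - fr f (z j.+1) &
      fr f (z jout) - fr f (z jout.+1) <= eps].

End Defs.

(* Main.v *)
Require Import Defs.
From HB Require Import structures.
From mathcomp Require Import all_boot all_order all_algebra.
From mathcomp Require Import all_classical all_reals all_analysis.
From mathcomp Require Import ring lra.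
Import Order.TTheory GRing.Theory Num.Theory.
Import numFieldNormedType.Exports.
Local Open Scope classical_set_scope.
Local Open Scope ring_scope.

Lemma Ad_x_step (R : realType) (n : nat) (f : 'rV[R]_n -> \bar R) A r k :
  (f (Ad_x f A r k.+1) <= f (Ad_x f A r k))%E.
Proof. rewrite /=; case: ifP => // _. Qed.

Lemma Ad_x_A (R : realType) (n : nat) (f : 'rV[R]_n -> \bar R) A r k :
  (f (Ad_x f A r k.+1) <= f (A r k.+1))%E.
Proof. rewrite /=; case: ifP => // /negbT; rewrite -ltNge => /ltW //. Qed.

Lemma Ad_x_mono (R : realType) (n : nat) (f : 'rV[R]_n -> \bar R) A r k k' :
  (k <= k')%N -> (f (Ad_x f A r k') <= f (Ad_x f A r k))%E.
Proof.
elim: k' => [|k' IH]; first by rewrite leqn0 => /eqP ->.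
rewrite leq_eqVlt => /orP [/eqP -> //| ]; rewrite ltnS => /IH H.
exact: le_trans (Ad_x_step _ _ _ _ _ _) H.
Qed.

Lemma real_bound (R: realType) (a c d fs af mu q K nb : R): 0<mu -> 0<af -> 0 < K -> 0<=q -> c <= d -> d - fs <= af / K^+2 * q -> mu/2*q <= a - fs -> 2*af/mu <= nb^+2 -> c - fs <= (nb/K)^+2 * (a - fs).
Proof.
move=> mu0 af0 K0 q0 cd H1 H2 H3.
have hq : q <= 2/mu*(a-fs).
  rewrite -(ler_pM2l (_ : 0 < mu/2)); last by rewrite divr_gt0.
  have -> : mu/2*(2/mu*(a-fs)) = a - fs by field; rewrite gt_eqF.
  by [].
have hK : 0 < K^+2 by rewrite exprn_gt0.
have ha : 0 <= a - fs by apply: le_trans H2; rewrite mulr_ge0 // divr_ge0 ?ltW.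
apply: (le_trans _ (le_trans H1 _)); first lra.
apply: le_trans (ler_wpM2l _ hq) _; first by rewrite divr_ge0 ?ltW.
have -> : af / K ^+ 2 * (2 / mu * (a - fs)) = (2*af/mu) / K^+2 * (a - fs).
  by field; rewrite !gt_eqF.
rewrite expr_div_n ler_wpM2r // ler_wpM2r // invr_ge0 ltW //.
Qed.

Lemma fin_le (R : realType) (x : \bar R) (a b : R) :
  (a%:E <= x)%E -> (x <= b%:E)%E -> x = (fine x)%:E.
Proof. by case: x. Qed.

Lemma nbar_sq (R : realType) (af mu rho : R) : 0 < af -> 0 < mu ->
  2 * af / mu <= (Num.max (2^-1) (Num.sqrt (2 * af / mu))) ^+ 2.
Proof.
move=> af0 mu0.
have h0 : 0 <= 2 * af / mu by rewrite divr_ge0 ?mulr_ge0 ?ltW.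
set s := Num.sqrt _.
have s0 : 0 <= s := sqrtr_ge0 _.
have hs : s <= Num.max (2^-1) s by rewrite le_max lexx orbT.
rewrite -{1}(sqr_sqrtr h0) -/s.
nra.
Qed.

Lemma Ad_bound (R : realType) (n : nat)
  (f : 'rV[R]_n -> \bar R) (N : 'rV[R]_n -> R) (fstar : R)
  (xbar : 'rV[R]_n -> 'rV[R]_n) (A : 'rV[R]_n -> nat -> 'rV[R]_n)
  (mu : R -> R) (af Lf : R) (g : 'rV[R]_n -> 'rV[R]_n) (rho : R) r k :
  (forall x, (fstar%:E <= f x)%E) ->
  (forall r, 0 < r -> 0 < mu r /\
     forall x, (f x - fstar%:E <= r%:E)%E ->
       ((mu r / 2 * N (x - xbar x) ^+ 2)%:E <= f x - fstar%:E)%E) ->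
  0 < af ->
  (forall x, (f x < +oo)%E ->
     (f (A x 1%N) <= f x - ((2 * Lf)^-1 * dualnorm N (g x) ^+ 2)%:E)%E /\
     (forall k, (1 <= k)%N ->
        (f (A x k) - fstar%:E
           <= (af / (k%:R + 1) ^+ 2 * N (x - xbar x) ^+ 2)%:E)%E)) ->
  0 < rho -> (f r - fstar%:E <= rho%:E)%E -> (1 <= k)%N ->
  fr f (Ad_x f A r k) - fstar <=
    (Num.max (2^-1) (Num.sqrt (2 * af / mu rho)) / (k%:R + 1)) ^+ 2
      * (fr f r - fstar).
Proof.
move=> Hlow Hmu af0 HA rho0 Hr k1.
have Er : f r = (fr f r)%:E.
  move: Hr (Hlow r); rewrite /fr; case: (f r) => //.
have Ex : f (Ad_x f A r k) = (fr f (Ad_x f A r k))%:E.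
  apply: (@fin_le _ _ fstar (fr f r)); first exact: Hlow.
  rewrite -Er; exact: (Ad_x_mono _ _ f A r 0 k (leq0n k)).
have [mu0 Hmu'] := Hmu rho rho0.
have [_ HAk] : _ := HA r (ltac:(by rewrite Er ltry)).
have HAk' := HAk k k1.
have Ea : f (A r k) = (fr f (A r k))%:E.
  move: HAk' (Hlow (A r k)); rewrite /fr; case: (f (A r k)) => //.
have Hxa : (f (Ad_x f A r k) <= f (A r k))%E.
  by rewrite -(prednK k1); exact: Ad_x_A.
move: Hxa HAk' (Hmu' r Hr); rewrite Ex Ea Er -!EFinB !lee_fin => Hxa HAk' Hm.
apply: real_bound Hxa HAk' Hm _ => //.
- exact: sqr_ge0.
- exact: nbar_sq.
Qed.

Lemma fr_ge (R : realType) (n : nat) (f : 'rV[R]_n -> \bar R) x (a b : R) :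
  (a%:E <= f x)%E -> (f x <= b%:E)%E -> a <= fr f x /\ fr f x <= b.
Proof. by rewrite /fr; case: (f x). Qed.

Lemma Ad_out_props (R : realType) (n : nat)
  (f : 'rV[R]_n -> \bar R) (N : 'rV[R]_n -> R) (fstar : R)
  (xbar : 'rV[R]_n -> 'rV[R]_n) (A : 'rV[R]_n -> nat -> 'rV[R]_n)
  (mu : R -> R) (af Lf : R) (g : 'rV[R]_n -> 'rV[R]_n) (rho : R) r nn z' m' :
  (forall x, (fstar%:E <= f x)%E) ->
  (forall r, 0 < r -> 0 < mu r /\
     forall x, (f x - fstar%:E <= r%:E)%E ->
       ((mu r / 2 * N (x - xbar x) ^+ 2)%:E <= f x - fstar%:E)%E) ->
  0 < af ->
  (forall x, (f x < +oo)%E ->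
     (f (A x 1%N) <= f x - ((2 * Lf)^-1 * dualnorm N (g x) ^+ 2)%:E)%E /\
     (forall k, (1 <= k)%N ->
        (f (A x k) - fstar%:E
           <= (af / (k%:R + 1) ^+ 2 * N (x - xbar x) ^+ 2)%:E)%E)) ->
  0 < rho -> (f r - fstar%:E <= rho%:E)%E ->
  Ad_out f A r nn z' m' ->
  let nbar := Num.max (2^-1) (Num.sqrt (2 * af / mu rho)) in
  [/\ (f z' <= f r)%E,
     (f z' <= f r - ((2 * Lf)^-1 * dualnorm N (g r) ^+ 2)%:E)%E,
     (f z' - fstar%:E <= ((nbar / (m'%:R + 1)) ^+ 2)%:E * (f r - fstar%:E))%E,
     nn <= m'%:R &
     (0 < nn <= ((Num.ceil (4 * nbar))%:~R : R) ->
        (m'%:R <= ((Num.ceil (4 * nbar))%:~R : R)))].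
Proof.
move=> Hlow Hmu af0 HA rho0 Hr [m1 [[Hnn Hstop] [Hno ->]]] nbar.
have Er : f r = (fr f r)%:E.
  move: Hr (Hlow r); rewrite /fr; case: (f r) => //.
have [HA1 HAk] : _ := HA r (ltac:(by rewrite Er ltry)).
have Hmono : forall k, (f (Ad_x f A r k) <= f r)%E.
  by move=> k; exact: (Ad_x_mono _ _ f A r 0 k (leq0n k)).
have Efin : forall k, f (Ad_x f A r k) = (fr f (Ad_x f A r k))%:E.
  by move=> k; apply: (@fin_le _ _ fstar (fr f r)); rewrite -?Er.
have Hb := fun k => @Ad_bound _ _ f N fstar xbar A mu af Lf g rho r k Hlow Hmu af0 HA rho0 Hr.
split => //.
- apply: le_trans (Ad_x_mono _ _ f A r 1 m' m1) _.
  exact: le_trans (Ad_x_A _ _ f A r 0) HA1.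
- by rewrite Efin Er -!EFinB -EFinM lee_fin; exact: Hb.
case/andP => nn0 nnK.
have [k Ek] : exists k : nat, Num.ceil (4 * nbar) = k%:Z.
  have : 0 <= Num.ceil (4 * nbar) :> int.
    rewrite ceil_ge0; apply: lt_le_trans (_ : 0 <= _).
      by rewrite ltrN10.
    by rewrite mulr_ge0 // le_max invr_ge0 ler0n.
  by case: (Num.ceil _) => // k _; exists k.
rewrite Ek /= in nnK *.
have hK : 4 * nbar <= k%:R.
  by have := ceil_ge (4 * nbar); rewrite Ek.
have k2 : (2 <= k)%N.
  rewrite -(ler_nat R); apply: le_trans hK.
  have : 2^-1 <= nbar by rewrite le_max lexx.
  lra.
rewrite ler_nat leqNgt; apply/negP => km.
apply: (Hno k); first by rewrite km andbT; apply: leq_trans k2.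
split => //.
set l := k./2.
have l1 : (1 <= l)%N by rewrite half_gt0.
have kl : (k < (l.+1).*2)%N by rewrite -ltn_half_double.
have Hl : fr f (Ad_x f A r l) - fstar <= (nbar / (l%:R + 1)) ^+ 2 * (fr f r - fstar) := Hb l l1.
have Hmono' : forall k, (f (Ad_x f A r k) <= (fr f r)%:E)%E by move=> k'; rewrite -Er.
have [fk0 _] := @fr_ge _ _ f _ _ _ (Hlow (Ad_x f A r k)) (Hmono' k).
have [fl0 fl1] := @fr_ge _ _ f _ _ _ (Hlow (Ad_x f A r l)) (Hmono' l).
have fkl : fr f (Ad_x f A r k) <= fr f (Ad_x f A r l).
  have lk : (l <= k)%N by rewrite leq_half_double -addnn; apply: leqW; exact: leq_addr.
  by have := Ad_x_mono _ _ f A r l k lk; rewrite !Efin lee_fin.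
have Ht : (nbar / (l%:R + 1)) ^+ 2 <= 4^-1.
  have kR : (k%:R : R) < l%:R * 2 + 2.
    have : (k%:R : R) < ((l.+1).*2)%:R by rewrite ltr_nat.
    rewrite -muln2 natrM -addn1 natrD; lra.
  have l0 : (0 : R) < l%:R + 1 by rewrite ltr_wpDl.
  have nb0 : 0 <= nbar by rewrite le_max invr_ge0 ler0n.
  set t := nbar / (l%:R + 1).
  have tdef : nbar = t * (l%:R + 1) by rewrite /t divfK // gt_eqF.
  have t0 : 0 <= t by rewrite /t divr_ge0 // ltW.
  have t2 : t * 2 < 1.
    rewrite tdef in hK; nra.
  nra.
have E0 : fr f (Ad_x f A r 0) = fr f r by [].
rewrite E0.
have ha : 0 <= fr f r - fstar by lra.
have : (nbar / (l%:R + 1)) ^+ 2 * (fr f r - fstar) <= 4^-1 * (fr f r - fstar).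
  by rewrite ler_wpM2r.
move=> H4; lra.
Qed.
Theorem mainTheorem3 (R : realType) (n : nat)
  (f : 'rV[R]_n -> \bar R) (N : 'rV[R]_n -> R) (fstar : R)
  (xbar : 'rV[R]_n -> 'rV[R]_n) (A : 'rV[R]_n -> nat -> 'rV[R]_n)
  (mu : R -> R) (af Lf : R) (g : 'rV[R]_n -> 'rV[R]_n)
  (rho : R) (z0 : 'rV[R]_n) (eps : R)
  (z : nat -> 'rV[R]_n) (m : nat -> nat) (s nn : nat -> R) (jout : nat) :
  (* f proper closed convex *)
  proper_fun f -> closed_fun f -> convex_fun f ->
  (* f^* = min f is attained *)
  (exists x, f x = fstar%:E) -> (forall x, (fstar%:E <= f x)%E) ->
  (* the norm and the projection xbar = argmin_{z in Omega_f} ||x - z|| *)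
  is_norm N ->
  (forall x, f (xbar x) = fstar%:E /\
     forall y, f y = fstar%:E -> N (x - xbar x) <= N (x - y)) ->
  (* the algorithm A *)
  (forall x, A x 0%N = x) ->
  (* Assumption (A)(i) *)
  (forall r, 0 < r -> 0 < mu r /\
     forall x, (f x - fstar%:E <= r%:E)%E ->
       ((mu r / 2 * N (x - xbar x) ^+ 2)%:E <= f x - fstar%:E)%E) ->
  (* Assumption (A)(ii) *)
  0 < af -> 0 < Lf ->
  (forall x, g x = 0 <-> f x = fstar%:E) ->
  (forall x, (f x < +oo)%E ->
     (f (A x 1%N) <= f x - ((2 * Lf)^-1 * dualnorm N (g x) ^+ 2)%:E)%E /\
     (forall k, (1 <= k)%N ->
        (f (A x k) - fstar%:E
           <= (af / (k%:R + 1) ^+ 2 * N (x - xbar x) ^+ 2)%:E)%E)) ->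
  (* data of the theorem *)
  0 < rho -> (f z0 - fstar%:E <= rho%:E)%E -> 0 < eps ->
  Astar_run f A z0 eps z m s nn jout ->
  let nbar := Num.max (2^-1) (Num.sqrt (2 * af / mu rho)) in
  (* (i) *)
  (forall j, (j <= jout)%N ->
     (f (z j) - fstar%:E <= rho%:E)%E /\
     (f (z j.+1) <= f (z j) - ((2 * Lf)^-1 * dualnorm N (g (z j)) ^+ 2)%:E)%E /\
     (f (z j.+1) - fstar%:E
        <= ((nbar / ((m j.+1)%:R + 1)) ^+ 2)%:E * (f (z j) - fstar%:E))%E /\
     (0 < nn j <= ((Num.ceil (4 * nbar))%:~R : R) ->
        nn j <= (m j.+1)%:R <= ((Num.ceil (4 * nbar))%:~R : R))) /\
  (* (ii) *)
  (forall j, (j <= jout)%N ->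
     (m j <= m j.+1)%N /\ (m j)%:R <= nn j <= (m j.+1)%:R) /\
  (* (iii) *)
  (forall j, (2 <= j <= jout)%N -> 0 < s j <= 1).
Proof.
move=> _ _ _ _ Hlow _ _ _ Hmu af0 Lf0 _ HA rho0 Hz0 eps0 [Ez0 Em0 Hj Hgt Hle] nbar.
have P := fun r zz mm nnj (Hr : (f r - fstar%:E <= rho%:E)%E) (Hout : Ad_out f A r nnj zz mm) =>
  @Ad_out_props _ _ f N fstar xbar A mu af Lf g rho r nnj zz mm Hlow Hmu af0 HA rho0 Hr Hout.
have Hin : forall j, (j <= jout)%N -> (f (z j) - fstar%:E <= rho%:E)%E.
  elim=> [|j IH] jj; first by rewrite Ez0.
  have jj' : (j <= jout)%N by apply: ltnW.
  have [_ [_ Ho]] := Hj j jj'.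
  have [Hd _ _ _ _] := P _ _ _ _ (IH jj') Ho.
  by apply: le_trans (IH jj'); apply: leeB.
have Pj : forall j, (j <= jout)%N -> _ := fun j jj =>
  P _ _ _ _ (Hin j jj) (Hj j jj).2.2.
have Hfin : forall j, (j <= jout.+1)%N -> f (z j) = (fr f (z j))%:E.
  move=> j jj; apply: (@fin_le _ _ fstar (rho + fstar)); first exact: Hlow.
  case: j jj => [|j] jj.
    by move: (Hin 0%N (leq0n _)); rewrite leeBlDr // EFinD.
  have [Hd _ _ _ _] := Pj j jj.
  have := Hin j jj; rewrite leeBlDr // -EFinD => H; exact: le_trans Hd H.
have Hdec : forall j, (j <= jout)%N -> fr f (z j.+1) <= fr f (z j).
  move=> j jj; have [Hd _ _ _ _] := Pj j jj.
  by move: Hd; rewrite (Hfin j) ?(leq_trans jj) // (Hfin j.+1) // lee_fin.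
split; [|split].
- move=> j jj; have [Hd Ha Hb Hc Hd'] := Pj j jj.
  split; first exact: Hin.
  do 2 split => //.
  move=> H; rewrite Hc /=; exact: Hd'.
- move=> j jj; have [Hd Ha Hb Hc Hd'] := Pj j jj.
  have [_ [Hn _]] := Hj j jj.
  have mn : (m j)%:R <= nn j by rewrite Hn le_max lexx.
  split; last by rewrite mn Hc.
  by rewrite -(ler_nat R); apply: le_trans Hc.
- move=> j /andP [j2 jj].
  have [Hs _] := Hj j jj.
  rewrite Hs j2.
  case: j j2 jj {Hs} => [|[|j]] // _ jj /=.
  have g1 : eps < fr f (z j.+1) - fr f (z j.+2) by apply: Hgt.
  have g2 : fr f (z j.+1) <= fr f (z j) by apply: Hdec; apply: ltnW; apply: ltnW.
  have d2 : 0 < fr f (z j) - fr f (z j.+2) by lra.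
  have r0 : 0 < (fr f (z j.+1) - fr f (z j.+2)) / (fr f (z j) - fr f (z j.+2)).
    by rewrite divr_gt0 //; lra.
  rewrite sqrtr_gt0 r0 /= -(sqrtr1 R) ler_sqrt // ler_pdivrMr // mul1r.
  lra.
Qed.
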